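(* For every integer $N\ge 5$ there exists $q_0(N)$ such that for all prime powers $q\ge q_0(N)$, $$f^{\mathrm{opt}}(N,q)=u\bigl(f^{\mathrm{opt}}(\cdot,q),N,q,k^*(N)\bigr).$$
   Context: Let $f(n,q)$ denote the smallest size of a set of lines of $\mathrm{PG}(n,q)$ (projective space over $\mathbb F_q$) such that every plane contains one of them; its values for small $n$ are $f(-1,q)=f(0,q)=f(1,q)=0$, $f(2,q)=1$, $f(3,q)=q^2+1$, $f(4,q)=q^4+2q^2+q+1$. For $n\ge1$ and a function $\phi$ defined on $\{-1,0,\dots,n-1\}$ with $\phi(-1)=0$, and $-1\le k\le\frac{n-1}{2}$, set $$u(\phi,n,q,k)=q^{2k+2}\phi(n-k-1)+\phi(k)+\Bigl(\sum_{i=0}^kq^i\Bigr)\Bigl(\sum_{j=k}^{n-2}q^j\Bigr).$$ Define $f^{\mathrm{opt}}(n,q)=f(n,q)$ for $-1\le n\le 4$, and recursively $f^{\mathrm{opt}}(n,q)=\min_{0\le k\le\frac{n-1}{2}}u(f^{\mathrm{opt}}(\cdot,q),n,q,k)$ for $n\ge5$. For a positive integer $n$, $k^*(n):=n-2^{\lfloor\log_2 n\rfloor}$ is the unique integer $0\le k\le\frac{n-1}{2}$ such that $n-k$ is a power of $2$. *)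

(* Defs.v *)
From mathcomp Require Import all_boot.
Set Implicit Arguments. Unset Strict Implicit. Unset Printing Implicit Defensive.

(* Functions phi are indexed by nat n >= 0; the value phi(-1) = 0 of the
   paper is never needed since k ranges over 0 <= k <= (n-1)/2. *)

Definition fbase (q n : nat) : nat :=
  match n with
  | 0 | 1 => 0
  | 2 => 1
  | 3 => q ^ 2 + 1
  | _ => q ^ 4 + 2 * q ^ 2 + q + 1
  end.

Definition u (phi : nat -> nat) (n q k : nat) : nat :=
  q ^ (2 * k + 2) * phi (n - k - 1) + phi k
  + (\sum_(0 <= i < k.+1) q ^ i) * (\sum_(k <= j < n - 1) q ^ j).

Definition min_upto (g : nat -> nat) (m : nat) : nat :=
  foldr (fun k acc => minn (g k) acc) (g 0) (iota 1 m).

Fixpoint fopt_aux (fuel q n : nat) : nat :=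
  match fuel with
  | 0 => 0
  | fuel'.+1 =>
      if n <= 4 then fbase q n
      else min_upto (fun k => u (fopt_aux fuel' q) n q k) ((n - 1) %/ 2)
  end.

(* f^opt(n, q); fuel n.+1 suffices since recursive calls are on smaller n. *)
Definition fopt (q n : nat) : nat := fopt_aux n.+1 q n.

Definition kstar (n : nat) : nat := n - 2 ^ trunc_log 2 n.

Definition prime_power (q : nat) : Prop :=
  exists p e, prime p /\ 0 < e /\ q = p ^ e.

(* Main.v *)
Require Import Defs.
From mathcomp Require Import all_boot.
From mathcomp Require Import all_order all_algebra zify ring lra.
Import Order.TTheory GRing.Theory Num.Theory.

Lemma foldr_min_cong (g g' : nat -> nat) a s :
  (forall k, k \in s -> g k = g' k) ->
  foldr (fun k acc => minn (g k) acc) a s = foldr (fun k acc => minn (g' k) acc) a s.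
Proof.
elim: s => [//|k s IH] H /=; rewrite H ?mem_head // IH // => i Hi.
by apply: H; rewrite in_cons Hi orbT.
Qed.

Lemma min_upto_cong (g g' : nat -> nat) m :
  (forall k, k <= m -> g k = g' k) -> min_upto g m = min_upto g' m.
Proof.
move=> H; rewrite /min_upto H // (@foldr_min_cong g g') // => k.
by rewrite mem_iota => /andP[_ h]; apply: H; lia.
Qed.

Lemma min_upto_le (g : nat -> nat) m k : k <= m -> min_upto g m <= g k.
Proof.
rewrite /min_upto.
have H : forall s a, foldr (fun k acc => minn (g k) acc) a s <= a /\
   (forall k, k \in s -> foldr (fun k acc => minn (g k) acc) a s <= g k).
  elim=> [|i s IH] a /=; first by split.
  have [IH1 IH2] := IH a.
  split; first by rewrite geq_min IH1 orbT.
  move=> j; rewrite in_cons => /orP[/eqP->|/IH2 h]; first by rewrite geq_min leqnn.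
  by rewrite geq_min h orbT.
case: k => [|k] hk; first by case: (H (iota 1 m) (g 0)).
by case: (H (iota 1 m) (g 0)) => _ ->//; rewrite mem_iota; lia.
Qed.

Lemma min_upto_ge (g : nat -> nat) m c : (forall k, k <= m -> c <= g k) -> c <= min_upto g m.
Proof.
move=> H; rewrite /min_upto.
have : forall k, k \in iota 1 m -> c <= g k.
  by move=> k; rewrite mem_iota => /andP[_ h]; apply: H; lia.
have : c <= g 0 by apply: H.
elim: (iota 1 m) (g 0) => [//|i s IH] a ha hs /=.
rewrite leq_min hs ?mem_head //=; apply: IH => // j hj; by apply: hs; rewrite in_cons hj orbT.
Qed.

Lemma fopt_aux_stable q : forall f1 f2 n, n < f1 -> n < f2 -> fopt_aux f1 q n = fopt_aux f2 q n.
Proof.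
elim=> [|f1 IH] [|f2] n //= h1 h2.
case: ifP => // hn; apply: min_upto_cong => k hk; rewrite /u.
rewrite (IH f2 (n - k - 1)) ?(IH f2 k) //; lia.
Qed.

Lemma fopt_unfold q n : fopt q n =
  if n <= 4 then fbase q n else min_upto (fun k => u (fopt q) n q k) ((n - 1) %/ 2).
Proof.
rewrite {1}/fopt /=; case: ifP => // hn; apply: min_upto_cong => k hk; rewrite /u.
by congr (_ * _ + _ + _); rewrite /fopt; apply: fopt_aux_stable; lia.
Qed.

Lemma geom0 q s : 0 < q -> (q - 1) * (\sum_(0 <= i < s) q ^ i) + 1 = q ^ s.
Proof.
move=> q0; elim: s => [|s IH]; first by rewrite big_geq // muln0.
rewrite big_nat_recr //= mulnDr -addnA (addnC _ 1) addnA IH expnS; nia.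
Qed.

Lemma geom q k n : 0 < q -> k <= n -> (q - 1) * (\sum_(k <= i < n) q ^ i) + q ^ k = q ^ n.
Proof.
move=> q0 kn; have := @geom0 q n q0; rewrite (@big_cat_nat _ _ _ k) //= mulnDr.
rewrite -(@geom0 q k q0); lia.
Qed.

Lemma fopt_small q : fopt q 0 = 0 /\ fopt q 1 = 0 /\ fopt q 2 = 1 /\ fopt q 3 = q ^ 2 + 1
  /\ fopt q 4 = q ^ 4 + 2 * q ^ 2 + q + 1.
Proof. by rewrite !fopt_unfold. Qed.

Lemma fopt_min q n k : 0 < q -> 1 <= n -> k <= (n - 1) %/ 2 -> fopt q n <= u (fopt q) n q k.
Proof.
move=> q0 n1 hk; rewrite [fopt q n]fopt_unfold; case: ifP => hn; last first.
  by apply: min_upto_le.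
have [f0 [f1 [f2 [f3 f4]]]] := fopt_small q.
have : [|| n == 1, n == 2, n == 3 | n == 4] by lia.
case/or4P => /eqP En; subst n.
- have -> : k = 0 by lia.
  by rewrite /u /= ?f0 ?f1 ?big_nat1 ?big_geq.
- have -> : k = 0 by lia.
  rewrite /u /= ?f0 ?f1 ?f2 ?big_nat1; lia.
- have : (k == 0) || (k == 1) by lia.
  case/orP => /eqP ->; rewrite /u /index_iota /= !big_cons !big_nil ?f0 ?f1 ?f2; nia.
- have : (k == 0) || (k == 1) by lia.
  case/orP => /eqP ->; rewrite /u /index_iota /= !big_cons !big_nil ?f0 ?f1 ?f2 ?f3; nia.
Qed.

Lemma fopt_exact24 q : fopt q 2 = u (fopt q) 2 q 0 /\ fopt q 4 = u (fopt q) 4 q 0.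
Proof.
have [f0 [f1 [f2 [f3 f4]]]] := fopt_small q.
rewrite /u /index_iota /= !big_cons !big_nil f0 f1 f2 f3 f4; split; nia.
Qed.

Local Open Scope ring_scope.

Definition xq (q : nat) : rat := (q%:R)^-1.
Definition E (q n : nat) : rat :=
  (q ^ n + q * (q - 1) ^ 2 * fopt q n)%:R * (xq q) ^+ (2 * n + 2).
Definition Ec (q n k : nat) : rat :=
  E q (n - k - 1) + (xq q) ^+ (2 * (n - k - 1) + 2) * (E q k - 1)
  + (1 - xq q) * (xq q) ^+ (n + (n - k - 1) + 2).

Lemma e2 (Q : rat) a : Q ^+ (2 * a) = Q ^+ a * Q ^+ a.
Proof. by rewrite mulnC exprM expr2. Qed.

Lemma costid_gen (q k m Fm Fk G1 G2 : nat) : (0 < q)%N ->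
  ((q - 1) * G1 + 1 = q ^ (k + 1))%N -> ((q - 1) * G2 + q ^ k = q ^ (k + m))%N ->
  (q ^ (k + m + 1) + q * (q - 1) ^ 2 * (q ^ (2 * k + 2) * Fm + Fk + G1 * G2))%:R
     * (xq q) ^+ (2 * (k + m + 1) + 2)
  = (q ^ m + q * (q - 1) ^ 2 * Fm)%:R * (xq q) ^+ (2 * m + 2)
    + (xq q) ^+ (2 * m + 2) * ((q ^ k + q * (q - 1) ^ 2 * Fk)%:R * (xq q) ^+ (2 * k + 2) - 1)
    + (1 - xq q) * (xq q) ^+ ((k + m + 1) + m + 2).
Proof.
move=> q0 H1 H2.
have h1 : ((q - 1) * G1 + 1)%:R = (q ^ (k + 1))%:R :> rat by rewrite H1.
have h2 : ((q - 1) * G2 + q ^ k)%:R = (q ^ (k + m))%:R :> rat by rewrite H2.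
move: h1 h2; rewrite !(natrD, natrM, natrX, natrB) // => h1 h2.
rewrite /xq.
have Q0 : (q%:R : rat) != 0 by rewrite pnatr_eq0 -lt0n.
have eA1 : (q%:R : rat) ^+ (k + 1) = q%:R * q%:R ^+ k by rewrite exprD expr1 mulrC.
have eAB : (q%:R : rat) ^+ (k + m) = q%:R ^+ k * q%:R ^+ m by rewrite exprD.
have eAB1 : (q%:R : rat) ^+ (k + m + 1) = q%:R * q%:R ^+ k * q%:R ^+ m
  by rewrite !exprD expr1 mulrC mulrA.
have e2k : (q%:R : rat) ^+ (2 * k + 2) = (q%:R * q%:R ^+ k) ^+ 2.
  by rewrite !exprD; ring.
have p1 : (q%:R : rat)^-1 ^+ (2 * (k + m + 1) + 2) = ((q%:R * q%:R * q%:R ^+ k * q%:R ^+ m) ^+ 2)^-1.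
  rewrite exprVn; congr (_^-1); have -> : (2 * (k + m + 1) + 2 = 2 * k + 2 * m + 4)%N by lia.
  by rewrite !exprD; ring.
have p2 : (q%:R : rat)^-1 ^+ (2 * m + 2) = ((q%:R * q%:R ^+ m) ^+ 2)^-1.
  by rewrite exprVn; congr (_^-1); rewrite !exprD; ring.
have p3 : (q%:R : rat)^-1 ^+ (2 * k + 2) = ((q%:R * q%:R ^+ k) ^+ 2)^-1.
  by rewrite exprVn; congr (_^-1); rewrite !exprD; ring.
have p4 : (q%:R : rat)^-1 ^+ (k + m + 1 + m + 2) = (q%:R * q%:R * q%:R * q%:R ^+ k * q%:R ^+ m * q%:R ^+ m)^-1.
  by rewrite exprVn; congr (_^-1); rewrite !exprD; ring.
rewrite eA1 in h1; rewrite eAB in h2; rewrite eAB1 e2k p1 p2 p3 p4.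
have A0 : (q%:R : rat) ^+ k != 0 by rewrite expf_neq0.
have B0 : (q%:R : rat) ^+ m != 0 by rewrite expf_neq0.
move: ((q%:R : rat) ^+ k) A0 h1 h2 => A A0 h1 h2.
move: ((q%:R : rat) ^+ m) B0 h2 => B B0 h2.
move: (q%:R : rat) Q0 h1 h2 => Q Q0 h1 h2.
have h1' : (Q - 1) * G1%:R = Q * A - 1 by rewrite -h1; ring.
have h2' : (Q - 1) * G2%:R = A * B - A by rewrite -h2; ring.
have HG : (Q - 1) ^+ 2 * (G1%:R * G2%:R) = (Q * A - 1) * (A * B - A)
  by rewrite -h1' -h2'; ring.
have -> : Q * (Q - 1) ^+ 2 * ((Q * A) ^+ 2 * Fm%:R + Fk%:R + G1%:R * G2%:R)
   = Q * (Q - 1) ^+ 2 * ((Q * A) ^+ 2 * Fm%:R + Fk%:R) + Q * ((Q - 1) ^+ 2 * (G1%:R * G2%:R)) by ring.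
rewrite HG.
field.
by rewrite A0 B0 Q0.
Qed.

Lemma costid q n k : (0 < q)%N -> (k < n)%N ->
  (q ^ n + q * (q - 1) ^ 2 * u (fopt q) n q k)%:R * (xq q) ^+ (2 * n + 2) = Ec q n k.
Proof.
move=> q0 kn; have [m hm] : exists m, n = (k + m + 1)%N by exists (n - k - 1)%N; lia.
subst n; rewrite /Ec /E /u.
have -> : (k + m + 1 - k - 1 = m)%N by lia.
have -> : (k + m + 1 - 1 = k + m)%N by lia.
apply: costid_gen => //; first by rewrite addn1; move: (@geom0 q k.+1 q0); lia.
by rewrite geom //; lia.
Qed.

Set Implicit Arguments. Unset Strict Implicit.

Lemma xq_ge0 q : 0 <= xq q.
Proof. by rewrite /xq invr_ge0 ler0n. Qed.

Lemma xq_mul q : (0 < q)%N -> xq q * q%:R = 1.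
Proof. by move=> q0; rewrite /xq mulVf // pnatr_eq0 -lt0n. Qed.

Lemma xq_le1 q : (0 < q)%N -> xq q <= 1.
Proof.
move=> q0; have h := xq_mul q0; have h0 := xq_ge0 q.
have h1 : 1 <= q%:R :> rat by rewrite ler1n.
nra.
Qed.

Lemma xq_le4 q : (4 <= q)%N -> xq q <= 1 / 4.
Proof.
move=> q4; have h := @xq_mul q (leq_trans (isT : (0 < 4)%N) q4); have h0 := xq_ge0 q.
have h1 : 4 <= q%:R :> rat by rewrite (ler_nat _ 4).
nra.
Qed.

Lemma xpow q a b : (0 < q)%N -> (a <= b)%N -> xq q ^+ b <= xq q ^+ a.
Proof. by move=> q0 ab; apply: ler_wiXn2l => //; [apply: xq_ge0 | apply: xq_le1]. Qed.

Lemma xpow_ge0 q a : 0 <= xq q ^+ a.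
Proof. by rewrite exprn_ge0 // xq_ge0. Qed.

Lemma E_ge0 q n : 0 <= E q n.
Proof. by rewrite /E mulr_ge0 ?ler0n ?xpow_ge0. Qed.

Lemma E0 q : E q 0 = xq q ^+ 2.
Proof.
have [f0 _] := fopt_small q.
by rewrite /E f0 muln0 addn0 expn0 mul1r.
Qed.

Lemma E_min q n k : (0 < q)%N -> (1 <= n)%N -> (k <= (n - 1) %/ 2)%N -> E q n <= Ec q n k.
Proof.
move=> q0 n1 hk; rewrite -costid //; last by lia.
rewrite /E ler_wpM2r ?xpow_ge0 // ler_nat leq_add2l leq_mul2l fopt_min //.
by rewrite orbT.
Qed.

Lemma E_exact q n : (0 < q)%N -> (kstar n < n)%N ->
  fopt q n = u (fopt q) n q (kstar n) -> E q n = Ec q n (kstar n).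
Proof. by move=> q0 kn H; rewrite -costid // /E H. Qed.

Lemma E_mono q n : (0 < q)%N -> E q n.+1 <= E q n.
Proof.
move=> q0; apply: le_trans (E_min q0 (isT : (1 <= n.+1)%N) (leq0n _)) _.
rewrite /Ec E0.
have -> : (n.+1 - 0 - 1 = n)%N by lia.
have -> : (n.+1 + n + 2 = (2 * n + 2).+1)%N by lia.
rewrite [xq q ^+ (2 * n + 2).+1]exprSr expr2.
have h0 := xq_ge0 q; have h1 := xq_le1 q0; have h2 := @xpow_ge0 q (2 * n + 2).
move: (xq q ^+ (2 * n + 2)) h2 => X h2; move: (xq q) h0 h1 => x h0 h1.
nra.
Qed.

Lemma E_anti q j j' : (0 < q)%N -> (j <= j')%N -> E q j' <= E q j.
Proof.
move=> q0 /subnK <-; elim: (j' - j)%N => [|d IH]; first by rewrite add0n.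
by rewrite addSn; apply: le_trans (E_mono _ q0) IH.
Qed.

Lemma E_le1 q n : (0 < q)%N -> E q n <= 1.
Proof.
move=> q0; apply: le_trans (E_anti q0 (leq0n n)) _.
by rewrite E0 exprn_ile1 ?xq_ge0 ?xq_le1.
Qed.

Lemma kstar_block a n : (2 ^ a <= n < 2 ^ a.+1)%N -> kstar n = (n - 2 ^ a)%N.
Proof. by move=> H; rewrite /kstar (trunc_log_eq (isT : (1 < 2)%N) H). Qed.

Lemma Ec_alt q n k m : (m = n - k - 1)%N ->
  Ec q n k = E q m + xq q ^+ (2 * m + 2) * (E q k - 1) + (1 - xq q) * xq q ^+ (n + m + 2).
Proof. by move->. Qed.

Lemma xpowS q a b : (0 < q)%N -> (a < b)%N -> xq q ^+ b <= xq q * xq q ^+ a.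
Proof. by move=> q0 ab; rewrite -exprS xpow. Qed.

Lemma core q n : (4 <= q)%N -> (5 <= n)%N ->
  (forall m, (5 <= m < n)%N -> fopt q m = u (fopt q) m q (kstar m)) ->
  forall k, (k <= (n - 1) %/ 2)%N -> Ec q n (kstar n) <= Ec q n k.
Proof.
move=> q4 n5 IH k hk.
have q0 : (0 < q)%N by lia.
have hx0 := xq_ge0 q; have hx4 := xq_le4 q4.
have [e24 e4] := fopt_exact24 q.
have Hblk : (2 ^ trunc_log 2 n <= n < 2 ^ (trunc_log 2 n).+1)%N.
  by rewrite trunc_logP ?trunc_log_ltn //; lia.
have ks : kstar n = (n - 2 ^ trunc_log 2 n)%N by [].
move: Hblk ks; case: (trunc_log 2 n) => [|[|a']].
- by rewrite /= => /andP[_ h]; lia.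
- by rewrite /= => /andP[_ h]; lia.
have ha' : (2 <= 2 ^ a'.+1)%N by rewrite expnS; have := expn_gt0 2 a'; lia.
have eP : (2 ^ a'.+2 = 2 * 2 ^ a'.+1)%N by rewrite expnS.
have eP3 : (2 ^ a'.+3 = 2 * (2 * 2 ^ a'.+1))%N by rewrite !expnS.
have hP2 : (2 ^ a'.+1 == 2)%N || (4 <= 2 ^ a'.+1)%N.
  clear; case: a' => [//|b]; rewrite !expnS; have := expn_gt0 2 b; lia.
move: (@kstar_block a'.+1) (@kstar_block a'.+2).
rewrite eP3 eP.
move=> KB1 KB2 Hb ks.
move: (2 ^ a'.+1)%N ha' hP2 KB1 KB2 Hb ks eP eP3 => P' ha' hP2 KB1 KB2 Hb ks _ _.
rewrite ks.
have Ex : forall m, (m == 2%N) || (m == 4%N) || (5 <= m < n)%N -> E q m = Ec q m (kstar m).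
  move=> m /orP[/orP[]/eqP->|hm].
  - by apply: E_exact => //; rewrite /kstar /=.
  - by apply: E_exact => //; rewrite /kstar /=.
  - apply: E_exact => //; last by apply: IH.
    rewrite /kstar; have := @trunc_logP 2 m isT; lia.
have hE0 := E_ge0; have hE1 := @E_le1 q _ q0.
rewrite (@Ec_alt q n (n - 2 * P') (2 * P' - 1)); last by lia.
case: (ltngtP k (n - 2 * P')) => hks; last first.
- by rewrite hks (@Ec_alt q n (n - 2 * P') (2 * P' - 1)) //; lia.
- (* k > k* *)
  set m := (n - k - 1)%N.
  have hm1 : (P' <= m <= 2 * P' - 2)%N by lia.
  have Em : E q m = Ec q m (m - P') .
    rewrite -KB1; last by lia.
    apply: Ex; lia.
  rewrite (@Ec_alt q m (m - P') (P' - 1)) in Em; last by lia.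
  have EP : E q (2 * P' - 1) <= Ec q (2 * P' - 1) (P' - 1) by apply: E_min => //; lia.
  rewrite (@Ec_alt q (2 * P' - 1) (P' - 1) (P' - 1)) in EP; last by lia.
  rewrite (@Ec_alt q n k m) // Em.
  have f1 : xq q ^+ (2 * (P' - 1) + 2) * E q (P' - 1) <= xq q ^+ (2 * (P' - 1) + 2) * E q (m - P').
    by rewrite ler_wpM2l ?xpow_ge0 // E_anti //; lia.
  have f2 : xq q ^+ (2 * (2 * P' - 1) + 2) * E q (n - 2 * P') <= xq q ^+ (2 * (2 * P' - 1) + 2).
    by rewrite ler_piMr ?xpow_ge0.
  have f3 : 0 <= xq q ^+ (2 * m + 2) * E q k by rewrite mulr_ge0 ?xpow_ge0.
  have f4 : 0 <= xq q * xq q ^+ (n + m + 2) by rewrite mulr_ge0 ?xpow_ge0.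
  have f4' := @xpow_ge0 q (n + m + 2).
  have f11 : xq q * xq q ^+ (n + m + 2) <= 1 / 4 * xq q ^+ (n + m + 2).
    by rewrite ler_wpM2r ?xpow_ge0.
  have f5 : xq q ^+ (2 * m + 2) <= xq q * xq q ^+ (m + (P' - 1) + 2) by apply: xpowS => //; lia.
  have f6 : xq q ^+ (2 * P' - 1 + (P' - 1) + 2) <= xq q * xq q ^+ (m + (P' - 1) + 2) by apply: xpowS => //; lia.
  have f7 : xq q ^+ (n + (2 * P' - 1) + 2) <= xq q * xq q ^+ (m + (P' - 1) + 2) by apply: xpowS => //; lia.
  have f8 : 0 <= xq q * xq q ^+ (2 * P' - 1 + (P' - 1) + 2) by rewrite mulr_ge0 ?xpow_ge0.
  have f9 : 0 <= xq q * xq q ^+ (n + (2 * P' - 1) + 2) by rewrite mulr_ge0 ?xpow_ge0.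
  have f10 : xq q * xq q ^+ (m + (P' - 1) + 2) <= 1 / 4 * xq q ^+ (m + (P' - 1) + 2).
    by rewrite ler_wpM2r ?xpow_ge0.
  clearbody m; lra.
- (* k < k* *)
  set m := (n - k - 1)%N.
  have hm1 : (2 * P' <= m < n)%N by lia.
  have Em : E q m = Ec q m (m - 2 * P').
    rewrite -KB2; last by lia.
    apply: Ex; lia.
  rewrite (@Ec_alt q m (m - 2 * P') (2 * P' - 1)) in Em; last by lia.
  rewrite (@Ec_alt q n k m) // Em.
  have f1 : xq q ^+ (2 * (2 * P' - 1) + 2) * E q (n - 2 * P') <= xq q ^+ (2 * (2 * P' - 1) + 2) * E q (m - 2 * P').
    by rewrite ler_wpM2l ?xpow_ge0 // E_anti //; lia.
  have f3 : 0 <= xq q ^+ (2 * m + 2) * E q k by rewrite mulr_ge0 ?xpow_ge0.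
  have f4 : 0 <= xq q * xq q ^+ (n + m + 2) by rewrite mulr_ge0 ?xpow_ge0.
  have f4' := @xpow_ge0 q (n + m + 2).
  have f11 : xq q * xq q ^+ (n + m + 2) <= 1 / 4 * xq q ^+ (n + m + 2).
    by rewrite ler_wpM2r ?xpow_ge0.
  have f5 : xq q ^+ (2 * m + 2) <= xq q * xq q ^+ (m + (2 * P' - 1) + 2) by apply: xpowS => //; lia.
  have f7 : xq q ^+ (n + (2 * P' - 1) + 2) <= xq q * xq q ^+ (m + (2 * P' - 1) + 2) by apply: xpowS => //; lia.
  have f9 : 0 <= xq q * xq q ^+ (n + (2 * P' - 1) + 2) by rewrite mulr_ge0 ?xpow_ge0.
  have f10 : xq q * xq q ^+ (m + (2 * P' - 1) + 2) <= 1 / 4 * xq q ^+ (m + (2 * P' - 1) + 2).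
    by rewrite ler_wpM2r ?xpow_ge0.
  have := @xpow_ge0 q (m + (2 * P' - 1) + 2).
  clearbody m; lra.
Qed.

Lemma kstar_le n : (1 <= n)%N -> (kstar n <= (n - 1) %/ 2)%N.
Proof.
move=> n1; rewrite /kstar.
have h1 := @trunc_logP 2 n isT n1; have h2 := @trunc_log_ltn 2 n isT.
rewrite expnS in h2; lia.
Qed.

Lemma main q n : (4 <= q)%N -> (5 <= n)%N -> fopt q n = u (fopt q) n q (kstar n).
Proof.
move=> q4; elim/ltn_ind: n => n IH n5.
have q0 : (0 < q)%N by lia.
have kn := @kstar_le n (leq_trans (isT : (1 <= 5)%N) n5).
have IH' : forall m, (5 <= m < n)%N -> fopt q m = u (fopt q) m q (kstar m).
  by move=> m /andP[h1 h2]; apply: IH.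
rewrite fopt_unfold ifF; last by lia.
apply/eqP; rewrite eqn_leq; apply/andP; split; first exact: min_upto_le.
apply: min_upto_ge => k hk.
have := core q4 n5 IH' hk.
rewrite -!costid //; try lia.
rewrite ler_pM2r; last by rewrite exprn_gt0 // /xq invr_gt0 ltr0n.
by rewrite ler_nat leq_add2l leq_pmul2l // muln_gt0 q0 expn_gt0 /=; lia.
Qed.

Unset Implicit Arguments.
Local Close Scope ring_scope.
Local Open Scope nat_scope.

Theorem proposition3p38 :
  forall N : nat, 5 <= N ->
  exists q0 : nat, forall q : nat, prime_power q -> q0 <= q ->
    fopt q N = u (fopt q) N q (kstar N).
Proof.
move=> N hN; exists 4 => q _ hq.
exact: main.
Qed.
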